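(* Let $(\mathfrak g,N)$ be a finite-dimensional Nijenhuis perm algebra, $r\in\mathfrak g\otimes\mathfrak g$ symmetric and $S:\mathfrak g\to\mathfrak g$ linear. Then $r$ is a solution of the $S$-admissible perm Yang–Baxter equation in $(\mathfrak g,N)$ if and only if $r^\sharp:\mathfrak g^*\to\mathfrak g$ is a weak $\mathcal O$-operator associated to $(\mathfrak g^*,R^*-L^*,R^* )$ and $S^*$. If moreover $S$ is admissible to $(\mathfrak g,N)$, then $r$ is a solution of the $S$-admissible perm Yang–Baxter equation in $(\mathfrak g,N)$ if and only if $r^\sharp$ is an $\mathcal O$-operator associated to the representation $(\mathfrak g^*,R^*-L^*,R^*,S^* )$ of $(\mathfrak g,N)$.
   Context: Over a field $K$. A (right) perm algebra: bilinear product with $(xy)z=x(yz)=x(zy)$. Nijenhuis operator: $N(x)N(y)+N^2(xy)=N(N(x)y)+N(xN(y))$. The $S$-admissible perm Yang–Baxter equation in $(\mathfrak g,N)$ for $r=\sum r^1\otimes r^2$ (second copy $\bar r$): $r_{13}r_{12}-r_{13}r_{23}+r_{23}r_{12}-r_{12}r_{23}=0$ and $(S\otimes\mathrm{id}-\mathrm{id}\otimes N)(r)=0$, where $r_{13}r_{12}=r^1\bar r^1\otimes\bar r^2\otimes r^2$, $r_{13}r_{23}=r^1\otimes\bar r^1\otimes r^2\bar r^2$, $r_{23}r_{12}=\bar r^1\otimes r^1\bar r^2\otimes r^2$, $r_{12}r_{23}=r^1\otimes r^2\bar r^1\otimes\bar r^2$. $r^\sharp(u^* )=\langle u^*,r^1\rangle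 r^2$. $\langle\xi R^*(a),y\rangle=\langle\xi,ya\rangle$, $\langle L^*(a)\xi,y\rangle=\langle\xi,ay\rangle$; in $(\mathfrak g^*,R^*-L^*,R^* )$ the left action is $(R^*-L^* )(a)\xi=\xi R^*(a)-L^*(a)\xi$ and the right action is $\xi R^*(a)$. A representation $(V,\ell,r)$ of $\mathfrak g$ is written with left action $\ell(x)v$ and right action $v\,r(x)$. Given a Nijenhuis perm algebra $(\mathfrak g,N)$, a representation $(V,\ell,r)$ of $\mathfrak g$ and $\alpha:V\to V$, a weak $\mathcal O$-operator associated to $(V,\ell,r)$ and $\alpha$ is a linear $T:V\to\mathfrak g$ with $T(u)T(v)=T(\ell(T(u))v+u\,r(T(v)))$ for $u,v\in V$ and $N\circ T=T\circ\alpha$; if $(V,\ell,r,\alpha)$ is a representation of $(\mathfrak g,N)$ (i.e. $\ell(N(x))\alpha(v)+\alpha^2(\ell(x)v)=\alpha(\ell(N(x))v)+\alpha(\ell(x)\alpha(v))$ and $\alpha(v)r(N(x))+\alpha^2(v\,r(x))=\alpha(v\,r(N(x)))+\alpha(\alpha(v)r(x))$) it is called an $\mathcal O$-operator associated to $(V,\ell,r,\alpha)$. $S$ is admissible to $(\mathfrak g,N)$ if $S(N(x)y)+xS^2(y)-N(x)S(y)-S(xS(y))=0$ and $S(xN(y))+S^2(x)y-S(x)N(y)-S(S(x)y)=0$. *)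

(* Defs.v *)
From HB Require Import structures.
From mathcomp Require Import all_boot all_order all_algebra.
Set Implicit Arguments. Unset Strict Implicit. Unset Printing Implicit Defensive.
Import GRing.Theory.
Local Open Scope ring_scope.

Section Generic.
Variable K : fieldType.
Variables (G V : lmodType K).

Definition perm_algebra (mul : G -> G -> G) : Prop :=
  forall x y z, mul (mul x y) z = mul x (mul y z) /\ mul x (mul y z) = mul x (mul z y).

Definition nijenhuis (mul : G -> G -> G) (N : G -> G) : Prop :=
  forall x y, mul (N x) (N y) + N (N (mul x y)) = N (mul (N x) y) + N (mul x (N y)).

(* representation (V, l, rr) of a perm algebra: left action l x v, right action
   rr v x (written v r(x)); g (+) V is a perm algebra (semidirect product) *)
Definition perm_rep (mul : G -> G -> G) (l : G -> V -> V) (rr : V -> G -> V) : Prop :=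
  (forall x, linear (l x)) /\ (forall x, linear (fun v => rr v x)) /\
  (forall x y v,
    [/\ l (mul x y) v = l x (l y v), l x (l y v) = l x (rr v y),
        rr (l x v) y = l x (rr v y) & l x (rr v y) = l x (l y v)] /\
    rr (rr v x) y = rr v (mul x y) /\ rr v (mul x y) = rr v (mul y x)).

Definition nijenhuis_rep (mul : G -> G -> G) (N : G -> G)
    (l : G -> V -> V) (rr : V -> G -> V) (alpha : V -> V) : Prop :=
  perm_rep mul l rr /\ linear alpha /\
  (forall x v, l (N x) (alpha v) + alpha (alpha (l x v))
               = alpha (l (N x) v) + alpha (l x (alpha v))) /\
  (forall x v, rr (alpha v) (N x) + alpha (alpha (rr v x))
               = alpha (rr v (N x)) + alpha (rr (alpha v) x)).

Definition weak_O_operator (mul : G -> G -> G) (N : G -> G)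
    (l : G -> V -> V) (rr : V -> G -> V) (alpha : V -> V) (T : V -> G) : Prop :=
  (forall u v, mul (T u) (T v) = T (l (T u) v + rr u (T v))) /\
  (forall v, N (T v) = T (alpha v)).

Definition O_operator (mul : G -> G -> G) (N : G -> G)
    (l : G -> V -> V) (rr : V -> G -> V) (alpha : V -> V) (T : V -> G) : Prop :=
  nijenhuis_rep mul N l rr alpha /\ weak_O_operator mul N l rr alpha T.

Definition admissible (mul : G -> G -> G) (N S : G -> G) : Prop :=
  (forall x y, S (mul (N x) y) + mul x (S (S y)) - mul (N x) (S y) - S (mul x (S y)) = 0) /\
  (forall x y, S (mul x (N y)) + mul (S (S x)) y - mul (S x) (N y) - S (mul (S x) y) = 0).

End Generic.

(* ---------- Concrete finite-dimensional setting ----------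
   g = K^n realised as row vectors 'rV[K]_n with standard basis e_i;
   g* is also 'rV[K]_n, with pairing <xi, y> = \sum_i xi_i y_i (dual basis).
   An element r of g (x) g is its coefficient matrix: r = \sum_{i,j} r i j e_i (x) e_j. *)
Section Concrete.
Variables (K : fieldType) (n : nat).
Local Notation g := 'rV[K]_n.

Definition ebasis (i : 'I_n) : g := delta_mx 0 i.

Definition pairing (xi y : g) : K := \sum_(i < n) xi 0 i * y 0 i.

(* xi R^* (a) : <xi R^* (a), y> = <xi, y a> *)
Definition Rstar (mul : g -> g -> g) (a xi : g) : g :=
  \row_i pairing xi (mul (ebasis i) a).
(* L^* (a) xi : <L^* (a) xi, y> = <xi, a y> *)
Definition Lstar (mul : g -> g -> g) (a xi : g) : g :=
  \row_i pairing xi (mul a (ebasis i)).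
Definition dualmap (f : g -> g) (xi : g) : g :=
  \row_i pairing xi (f (ebasis i)).

Definition coadjL (mul : g -> g -> g) (a xi : g) : g := Rstar mul a xi - Lstar mul a xi.
Definition coadjR (mul : g -> g -> g) (xi a : g) : g := Rstar mul a xi.

Definition rsharp (r : 'M[K]_n) (u : g) : g :=
  \sum_(i < n) \sum_(j < n) (r i j * pairing u (ebasis i)) *: ebasis j.

(* coordinates of pure tensors *)
Definition t2 (u v : g) (p q : 'I_n) : K := u 0 p * v 0 q.
Definition t3 (u v w : g) (p q s : 'I_n) : K := u 0 p * v 0 q * w 0 s.

(* r13 r12 - r13 r23 + r23 r12 - r12 r23 = 0, coordinatewise, with
   r = \sum r i j e_i (x) e_j (r^1 = e_i, r^2 = e_j) and
   rbar = \sum r k l e_k (x) e_l (rbar^1 = e_k, rbar^2 = e_l). *)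
Definition pybe_tensor_eq (mul : g -> g -> g) (r : 'M[K]_n) : Prop :=
  forall p q s : 'I_n,
    \sum_(i < n) \sum_(j < n) \sum_(k < n) \sum_(l < n)
      r i j * r k l *
      ( t3 (mul (ebasis i) (ebasis k)) (ebasis l) (ebasis j) p q s
      - t3 (ebasis i) (ebasis k) (mul (ebasis j) (ebasis l)) p q s
      + t3 (ebasis k) (mul (ebasis i) (ebasis l)) (ebasis j) p q s
      - t3 (ebasis i) (mul (ebasis j) (ebasis k)) (ebasis l) p q s ) = 0.

(* (S (x) id - id (x) N)(r) = 0, coordinatewise *)
Definition SN_compat (N S : g -> g) (r : 'M[K]_n) : Prop :=
  forall p q : 'I_n,
    \sum_(i < n) \sum_(j < n)
      r i j * (t2 (S (ebasis i)) (ebasis j) p q - t2 (ebasis i) (N (ebasis j)) p q) = 0.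

Definition S_adm_PYBE (mul : g -> g -> g) (N S : g -> g) (r : 'M[K]_n) : Prop :=
  pybe_tensor_eq mul r /\ SN_compat N S r.

End Concrete.

(* Main.v *)
Require Import Defs.
From HB Require Import structures.
From mathcomp Require Import all_boot all_order all_algebra.
From mathcomp Require Import ring.
Set Warnings "-all".
Import GRing.Theory.
Local Open Scope ring_scope.

Section Helpers.
Context {K : fieldType} {n : nat}.
Local Notation g := 'rV[K]_n.
Implicit Types (f h : g -> g) (x y u v w : g).
Local Notation e := (ebasis K).

Lemma linD f : linear f -> forall x y, f (x + y) = f x + f y.
Proof. by move=> lf x y; have := lf 1 x y; rewrite !scale1r. Qed.

Lemma lin0 f : linear f -> f 0 = 0.
Proof.
move=> lf; have := linD f lf 0 0; rewrite addr0.
by move/(congr1 (fun z => z - f 0)); rewrite subrr addrK.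
Qed.

Lemma linZ f : linear f -> forall a x, f (a *: x) = a *: f x.
Proof. by move=> lf a x; have := lf a x 0; rewrite !addr0 (lin0 f lf) addr0. Qed.

Lemma lin_sum f (I : finType) (F : I -> g) : linear f ->
  f (\sum_i F i) = \sum_i f (F i).
Proof. by move=> lf; apply: (big_morph f (linD f lf) (lin0 f lf)). Qed.

Lemma ebE (a b : 'I_n) : e a 0 b = (a == b)%:R.
Proof. by rewrite /ebasis mxE eqxx /= eq_sym. Qed.

Lemma row_dec u : u = \sum_j u 0 j *: e j.
Proof. exact: row_sum_delta. Qed.

Lemma lin_expand f u : linear f -> f u = \sum_p u 0 p *: f (e p).
Proof.
move=> lf; rewrite {1}(row_dec u) (lin_sum _ _ _ lf).
by apply: eq_bigr => p _; rewrite (linZ f lf).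
Qed.

Lemma pairingDl x y w : pairing (x + y) w = pairing x w + pairing y w.
Proof. rewrite /pairing -big_split; apply: eq_bigr => i _; by rewrite mxE mulrDl. Qed.
Lemma pairingBl x y w : pairing (x - y) w = pairing x w - pairing y w.
Proof. rewrite /pairing -sumrB; apply: eq_bigr => i _; rewrite !mxE; ring. Qed.
Lemma pairingZl a x w : pairing (a *: x) w = a * pairing x w.
Proof. rewrite /pairing mulr_sumr; apply: eq_bigr => i _; rewrite mxE; ring. Qed.
Lemma pairingDr x y w : pairing w (x + y) = pairing w x + pairing w y.
Proof. rewrite /pairing -big_split; apply: eq_bigr => i _; by rewrite mxE mulrDr. Qed.
Lemma pairingBr x y w : pairing w (x - y) = pairing w x - pairing w y.
Proof. rewrite /pairing -sumrB; apply: eq_bigr => i _; rewrite !mxE; ring. Qed.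
Lemma pairingZr a x w : pairing w (a *: x) = a * pairing w x.
Proof. rewrite /pairing mulr_sumr; apply: eq_bigr => i _; rewrite mxE; ring. Qed.
Lemma pairing0r w : pairing w 0 = 0.
Proof. by rewrite /pairing big1 // => i _; rewrite mxE mulr0. Qed.
Lemma pairing_sumr w (I : finType) (F : I -> g) :
  pairing w (\sum_i F i) = \sum_i pairing w (F i).
Proof. exact: (big_morph _ (fun a b => pairingDr a b w) (pairing0r w)). Qed.

Lemma pairing_er x (i : 'I_n) : pairing x (e i) = x 0 i.
Proof.
rewrite /pairing (bigD1 i) //= big1 ?addr0; first by rewrite ebE eqxx mulr1.
by move=> j Hj; rewrite ebE eq_sym (negbTE Hj) mulr0.
Qed.
Lemma pairing_el x (i : 'I_n) : pairing (e i) x = x 0 i.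
Proof.
rewrite /pairing (bigD1 i) //= big1 ?addr0; first by rewrite ebE eqxx mul1r.
by move=> j Hj; rewrite ebE eq_sym (negbTE Hj) mul0r.
Qed.

Lemma pairing_ext x y : (forall w, pairing x w = pairing y w) -> x = y.
Proof. by move=> H; apply/rowP => i; rewrite -!pairing_er H. Qed.

Lemma dual_pairing f xi w : linear f ->
  pairing (\row_i pairing xi (f (e i))) w = pairing xi (f w).
Proof.
move=> lf; rewrite (lin_expand f w lf) pairing_sumr {1}/pairing.
by apply: eq_bigr => i _; rewrite mxE pairingZr mulrC.
Qed.

End Helpers.

Lemma sum_only (K : fieldType) n (q : 'I_n) (F : 'I_n -> K) :
  (forall l, l != q -> F l = 0) -> \sum_l F l = F q.
Proof. by move=> H; rewrite (bigD1 q) //= big1 ?addr0 // => l /H. Qed.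
Arguments sum_only {K n} q {F}.

Section Elim.
Context {K : fieldType} {n : nat}.
Implicit Types (p : 'I_n).

Lemma elim4_4 p (F : 'I_n -> 'I_n -> 'I_n -> 'I_n -> K) :
  (forall i j k l, l != p -> F i j k l = 0) ->
  \sum_i \sum_j \sum_k \sum_l F i j k l = \sum_i \sum_j \sum_k F i j k p.
Proof.
move=> H; apply: eq_bigr => i _; apply: eq_bigr => j _; apply: eq_bigr => k _.
by apply: sum_only => l; apply: H.
Qed.
Lemma elim4_2 p (F : 'I_n -> 'I_n -> 'I_n -> 'I_n -> K) :
  (forall i j k l, j != p -> F i j k l = 0) ->
  \sum_i \sum_j \sum_k \sum_l F i j k l = \sum_i \sum_k \sum_l F i p k l.
Proof.
move=> H; apply: eq_bigr => i _; apply: (sum_only p) => j Hj.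
by rewrite big1 // => k _; rewrite big1 // => l _; apply: H.
Qed.
Lemma elim4_1 p (F : 'I_n -> 'I_n -> 'I_n -> 'I_n -> K) :
  (forall i j k l, i != p -> F i j k l = 0) ->
  \sum_i \sum_j \sum_k \sum_l F i j k l = \sum_j \sum_k \sum_l F p j k l.
Proof.
move=> H; apply: (sum_only p) => i Hi.
by rewrite big1 // => j _; rewrite big1 // => k _; rewrite big1 // => l _; apply: H.
Qed.
Lemma elim3_2 p (F : 'I_n -> 'I_n -> 'I_n -> K) :
  (forall i j k, j != p -> F i j k = 0) ->
  \sum_i \sum_j \sum_k F i j k = \sum_i \sum_k F i p k.
Proof.
move=> H; apply: eq_bigr => i _; apply: (sum_only p) => j Hj.
by rewrite big1 // => k _; apply: H.
Qed.
Lemma elim3_3 p (F : 'I_n -> 'I_n -> 'I_n -> K) :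
  (forall i j k, k != p -> F i j k = 0) ->
  \sum_i \sum_j \sum_k F i j k = \sum_i \sum_j F i j p.
Proof.
move=> H; apply: eq_bigr => i _; apply: eq_bigr => j _.
by apply: sum_only => k; apply: H.
Qed.
Lemma elim2_2 p (F : 'I_n -> 'I_n -> K) :
  (forall i j, j != p -> F i j = 0) ->
  \sum_i \sum_j F i j = \sum_i F i p.
Proof. by move=> H; apply: eq_bigr => i _; apply: sum_only => k; apply: H. Qed.
Lemma elim2_1 p (F : 'I_n -> 'I_n -> K) :
  (forall i j, i != p -> F i j = 0) ->
  \sum_i \sum_j F i j = \sum_j F p j.
Proof. by move=> H; apply: (sum_only p) => i Hi; rewrite big1 // => j _; apply: H. Qed.

Lemma split1 (F G H J : 'I_n -> K) :
  \sum_i (F i - G i + H i - J i) =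
  \sum_i F i - \sum_i G i + \sum_i H i - \sum_i J i.
Proof. by rewrite sumrB big_split sumrB. Qed.

Lemma split4 (F G H J : 'I_n -> 'I_n -> 'I_n -> 'I_n -> K) :
  \sum_i \sum_j \sum_k \sum_l (F i j k l - G i j k l + H i j k l - J i j k l) =
  \sum_i \sum_j \sum_k \sum_l F i j k l - \sum_i \sum_j \sum_k \sum_l G i j k l
  + \sum_i \sum_j \sum_k \sum_l H i j k l - \sum_i \sum_j \sum_k \sum_l J i j k l.
Proof.
rewrite -split1; apply: eq_bigr => i _; rewrite -split1; apply: eq_bigr => j _.
by rewrite -split1; apply: eq_bigr => k _; rewrite -split1.
Qed.

Lemma split2 (F G : 'I_n -> 'I_n -> K) :
  \sum_i \sum_j (F i j - G i j) = \sum_i \sum_j F i j - \sum_i \sum_j G i j.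
Proof. by rewrite -sumrB; apply: eq_bigr => i _; rewrite sumrB. Qed.

End Elim.

Section Main.
Variables (K : fieldType) (n : nat).
Local Notation g := 'rV[K]_n.
Local Notation e := (ebasis K).
Variable mul : g -> g -> g.
Hypothesis mul_linl : forall y, linear (fun x => mul x y).
Hypothesis mul_linr : forall x, linear (mul x).
Variable r : 'M[K]_n.
Hypothesis Hsym : r^T = r.
Local Notation T := (rsharp r).
Local Notation C a b c := (mul (e a) (e b) 0 c).

Lemma rsym a b : r a b = r b a.
Proof. by rewrite -[in LHS]Hsym mxE. Qed.

Lemma rsharpE u : T u = u *m r.
Proof.
apply/rowP => b; rewrite /rsharp summxE mxE; apply: eq_bigr => i _.
rewrite summxE (bigD1 b) //= big1 ?addr0.
  by rewrite !mxE pairing_er !eqxx /= mulr1 mulrC.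
by move=> j Hj; rewrite !mxE eqxx /= eq_sym (negbTE Hj) mulr0.
Qed.

Lemma Tlin : linear T.
Proof. by move=> a x y; rewrite !rsharpE mulmxDl scalemxAl. Qed.

Lemma Te p : T (e p) = row p r.
Proof. by rewrite rsharpE rowE. Qed.

Lemma TE u c : T u 0 c = \sum_i u 0 i * r i c.
Proof. by rewrite rsharpE mxE. Qed.

Lemma lin_comp (f h : g -> g) : linear f -> linear h -> linear (fun x => f (h x)).
Proof. by move=> lf lh a x y; rewrite lh lf. Qed.
Lemma lin_add (f h : g -> g) : linear f -> linear h -> linear (fun x => f x + h x).
Proof.
move=> lf lh a x y; rewrite lf lh scalerDr.
by rewrite -!addrA; congr (_ + _); rewrite addrCA.
Qed.
Lemma lin_sub (f h : g -> g) : linear f -> linear h -> linear (fun x => f x - h x).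
Proof.
move=> lf lh a x y; rewrite lf lh scalerBr opprD.
by rewrite -!addrA; congr (_ + _); rewrite addrCA.
Qed.

Arguments lin_comp {f h}.
Arguments lin_add {f h}.
Arguments lin_sub {f h}.

Lemma Rstar_lin_a xi : linear (fun a => Rstar mul a xi).
Proof.
move=> c x y; apply/rowP => i; rewrite !mxE mul_linr pairingDr pairingZr.
by [].

Qed.
Lemma Rstar_lin_xi a : linear (Rstar mul a).
Proof. by move=> c x y; apply/rowP => i; rewrite !mxE pairingDl pairingZl. Qed.
Lemma Lstar_lin_a xi : linear (fun a => Lstar mul a xi).
Proof.
move=> c x y; apply/rowP => i; rewrite !mxE (mul_linl (e i)) pairingDr pairingZr.
by [].

Qed.
Lemma Lstar_lin_xi a : linear (Lstar mul a).
Proof. by move=> c x y; apply/rowP => i; rewrite !mxE pairingDl pairingZl. Qed.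
Lemma coadjL_lin_a xi : linear (fun a => coadjL mul a xi).
Proof. exact: (lin_sub (Rstar_lin_a xi) (Lstar_lin_a xi)). Qed.
Lemma coadjL_lin_xi a : linear (coadjL mul a).
Proof. exact: (lin_sub (Rstar_lin_xi a) (Lstar_lin_xi a)). Qed.
Lemma coadjR_lin_a xi : linear (coadjR mul xi).
Proof. exact: Rstar_lin_a. Qed.
Lemma coadjR_lin_xi a : linear (fun xi => coadjR mul xi a).
Proof. exact: Rstar_lin_xi. Qed.
Lemma dual_lin (f : g -> g) : linear (dualmap f).
Proof. by move=> c x y; apply/rowP => i; rewrite !mxE pairingDl pairingZl. Qed.

Lemma bilin_expand (B : g -> g -> g) u v :
  (forall v, linear (fun u => B u v)) -> (forall u, linear (B u)) ->
  B u v = \sum_p \sum_q (u 0 p * v 0 q) *: B (e p) (e q).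
Proof.
move=> l1 l2; have E := lin_expand (fun u => B u v) u (l1 v); cbv beta in E.
rewrite E; apply: eq_bigr => p _.
rewrite (lin_expand (B (e p)) v (l2 _)) scaler_sumr; apply: eq_bigr => q _.
by rewrite scalerA.
Qed.

Lemma mulRE z x c : mul z x 0 c = \sum_b x 0 b * mul z (e b) 0 c.
Proof.
rewrite (lin_expand (mul z) x (mul_linr z)) summxE.
by apply: eq_bigr => b _; rewrite mxE.
Qed.
Lemma mulLE z x c : mul x z 0 c = \sum_a x 0 a * mul (e a) z 0 c.
Proof.
have E := lin_expand (fun x => mul x z) x (mul_linl z); cbv beta in E.
rewrite E summxE; by apply: eq_bigr => b _; rewrite mxE.
Qed.

Lemma pybeE p q s :
  \sum_(i < n) \sum_(j < n) \sum_(k < n) \sum_(l < n)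
      r i j * r k l *
      ( t3 (mul (e i) (e k)) (e l) (e j) p q s
      - t3 (e i) (e k) (mul (e j) (e l)) p q s
      + t3 (e k) (mul (e i) (e l)) (e j) p q s
      - t3 (e i) (mul (e j) (e k)) (e l) p q s ) =
  T (coadjL mul (T (e p)) (e q) + coadjR mul (e p) (T (e q))) 0 s
  - mul (T (e p)) (T (e q)) 0 s.
Proof.
under eq_bigr => i _ do under eq_bigr => j _ do under eq_bigr => k _ do
  under eq_bigr => l _ do rewrite mulrBr mulrDr mulrBr.
rewrite split4.
rewrite (elim4_4 q); last by move=> i j k l Hl; rewrite /t3 ebE (negbTE Hl) mulr0 mul0r mulr0.
rewrite (elim3_2 s); last by move=> i j k Hj; rewrite /t3 !ebE (negbTE Hj) !mulr0.
rewrite (elim4_1 p); last by move=> i j k l Hi; rewrite /t3 ebE (negbTE Hi) !mul0r mulr0.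
rewrite (elim3_2 q); last by move=> i j k Hj; rewrite /t3 !ebE (negbTE Hj) mulr0 mul0r mulr0.
rewrite (elim4_2 s); last by move=> i j k l Hj; rewrite /t3 [e j _ _]ebE (negbTE Hj) !mulr0.
rewrite (elim3_2 p); last by move=> i j k Hj; rewrite /t3 !ebE (negbTE Hj) !mul0r mulr0.
rewrite (elim4_1 p); last by move=> i j k l Hi; rewrite /t3 ebE (negbTE Hi) !mul0r mulr0.
rewrite (elim3_3 s); last by move=> i j k Hj; rewrite /t3 [e k _ _]ebE (negbTE Hj) !mulr0.
rewrite /t3 !ebE !eqxx.
rewrite !Te.
have -> : mul (row p r) (row q r) 0 s = \sum_a \sum_b r p a * r q b * C a b s.
  rewrite mulLE; apply: eq_bigr => a _; rewrite mulRE mulr_sumr.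
  by apply: eq_bigr => b _; rewrite !mxE mulrA.
have -> : T (coadjL mul (row p r) (e q) + coadjR mul (e p) (row q r)) 0 s =
  \sum_i ((\sum_b r p b * C i b q) - (\sum_a r p a * C a i q)
           + (\sum_b r q b * C i b p)) * r i s.
  rewrite TE; apply: eq_bigr => i _.
  rewrite /coadjL /coadjR /Rstar /Lstar !mxE !pairing_el.
  rewrite (mulRE (e i) (row p r)) (mulLE (e i) (row p r)) (mulRE (e i) (row q r)).
  by congr ((_ - _ + _) * _); apply: eq_bigr => b _; rewrite mxE.
rewrite /= !mulr1n.
have -> : \sum_i \sum_k r i s * r k q * (C i k p * 1 * 1) = \sum_i (\sum_b r q b * C i b p) * r i s.
  apply: eq_bigr => i _; rewrite mulr_suml; apply: eq_bigr => k _.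
  rewrite (rsym k q); ring.
have -> : \sum_i \sum_k r p i * r q k * (1 * 1 * C i k s) = \sum_a \sum_b r p a * r q b * C a b s.
  apply: eq_bigr => i _; apply: eq_bigr => k _; ring.
have -> : \sum_i \sum_k r i s * r p k * (1 * C i k q * 1) = \sum_i (\sum_b r p b * C i b q) * r i s.
  apply: eq_bigr => i _; rewrite mulr_suml; apply: eq_bigr => k _; ring.
have -> : \sum_i \sum_j r p i * r j s * (1 * C i j q * 1) = \sum_i (\sum_a r p a * C a i q) * r i s.
  rewrite exchange_big; apply: eq_bigr => i _; rewrite mulr_suml; apply: eq_bigr => k _; ring.
under eq_bigr => i _ do rewrite mulrDl mulrBl.
rewrite big_split sumrB /=.
ring.
Qed.


Lemma weak1_iff : pybe_tensor_eq mul r <->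
  (forall u v, mul (T u) (T v) = T (coadjL mul (T u) v + coadjR mul u (T v))).
Proof.
split.
- move=> H u v.
  have l1 : forall v, linear (fun u => mul (T u) (T v)).
    by move=> v'; apply: (lin_comp (mul_linl _) Tlin).
  have l2 : forall u, linear (fun v => mul (T u) (T v)).
    by move=> u'; apply: (lin_comp (mul_linr _) Tlin).
  have l3 : forall v, linear (fun u => T (coadjL mul (T u) v + coadjR mul u (T v))).
    move=> v'; apply: (lin_comp Tlin).
    exact: (lin_add (lin_comp (coadjL_lin_a v') Tlin) (coadjR_lin_xi (T v'))).
  have l4 : forall u, linear (fun v => T (coadjL mul (T u) v + coadjR mul u (T v))).
    move=> u'; apply: (lin_comp Tlin).
    exact: (lin_add (coadjL_lin_xi (T u')) (lin_comp (coadjR_lin_a u') Tlin)).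
  have E1 := bilin_expand (fun u v => mul (T u) (T v)) u v l1 l2.
  have E2 := bilin_expand (fun u v => T (coadjL mul (T u) v + coadjR mul u (T v))) u v l3 l4.
  cbv beta in E1, E2; rewrite E1 E2.
  apply: eq_bigr => p _; apply: eq_bigr => q _; congr (_ *: _).
  apply/rowP => s; have := H p q s; rewrite pybeE; move/eqP.
  by rewrite subr_eq0; move/eqP ->.
- move=> H p q s; rewrite pybeE.
  by rewrite H subrr.
Qed.

Lemma weak2_iff (N S : g -> g) : linear N -> linear S ->
  (SN_compat N S r <-> (forall v, N (T v) = T (dualmap S v))).
Proof.
move=> lN lS.
have SNE : forall p q,
  \sum_i \sum_j r i j * (t2 (S (e i)) (e j) p q - t2 (e i) (N (e j)) p q) =
  T (dualmap S (e p)) 0 q - N (T (e p)) 0 q.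
  move=> p q.
  under eq_bigr => i _ do under eq_bigr => j _ do rewrite mulrBr.
  rewrite split2.
  rewrite (elim2_2 q); last by move=> i j Hj; rewrite /t2 ebE (negbTE Hj) !mulr0.
  rewrite (elim2_1 p); last by move=> i j Hi; rewrite /t2 ebE (negbTE Hi) !mul0r mulr0.
  rewrite /t2 !ebE !eqxx /= !mulr1n TE Te (lin_expand N (row p r) lN) summxE.
  congr (_ - _); apply: eq_bigr => i _; rewrite !mxE ?pairing_el; ring.
have l1 : linear (fun v => N (T v)) := lin_comp lN Tlin.
have l2 : linear (fun v => T (dualmap S v)) := lin_comp Tlin (dual_lin S).
split.
- move=> H v.
  have E1 := lin_expand (fun v => N (T v)) v l1.
  have E2 := lin_expand (fun v => T (dualmap S v)) v l2.
  cbv beta in E1, E2; rewrite E1 E2; apply: eq_bigr => p _; congr (_ *: _).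
  apply/rowP => q; have := H p q; rewrite SNE; move/eqP.
  by rewrite subr_eq0; move/eqP ->.
- by move=> H p q; rewrite SNE H subrr.
Qed.

End Main.

Section Rep.
Context {K : fieldType} {n : nat}.
Local Notation g := 'rV[K]_n.
Variable mul : g -> g -> g.
Hypothesis mul_linl : forall y, linear (fun x => mul x y).
Hypothesis mul_linr : forall x, linear (mul x).
Hypothesis Hperm : perm_algebra mul.

Lemma pcL a xi w : pairing (coadjL mul a xi) w = pairing xi (mul w a) - pairing xi (mul a w).
Proof.
rewrite /coadjL pairingBl /Rstar /Lstar.
by rewrite (dual_pairing _ _ _ (mul_linl a)) (dual_pairing _ _ _ (mul_linr a)).
Qed.
Lemma pcR xi a w : pairing (coadjR mul xi a) w = pairing xi (mul w a).
Proof. by rewrite /coadjR /Rstar (dual_pairing _ _ _ (mul_linl a)). Qed.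
Lemma pD (f : g -> g) xi w : linear f -> pairing (dualmap f xi) w = pairing xi (f w).
Proof. by move=> lf; rewrite /dualmap (dual_pairing _ _ _ lf). Qed.

Lemma mA x y z : mul (mul x y) z = mul x (mul y z).
Proof. by case: (Hperm x y z). Qed.
Lemma mC x y z : mul x (mul y z) = mul x (mul z y).
Proof. by case: (Hperm x y z). Qed.

Lemma coadj_rep : perm_rep mul (coadjL mul) (coadjR mul).
Proof.
split; first by move=> x; exact: coadjL_lin_xi.
split; first by move=> x; exact: coadjR_lin_xi.
move=> x y v; split; first split.
- apply: pairing_ext => w; rewrite !pcL !mA.
  rewrite [mul y (mul w x)]mC [mul x (mul w y)]mC; ring.
- apply: pairing_ext => w; rewrite !(pcL, pcR) !mA.
  rewrite [mul y (mul w x)]mC; ring.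
- apply: pairing_ext => w; rewrite !(pcL, pcR) !mA.
  rewrite [mul w (mul y x)]mC; ring.
- apply: pairing_ext => w; rewrite !(pcL, pcR) !mA.
  rewrite [mul y (mul w x)]mC; ring.
split.
- by apply: pairing_ext => w; rewrite !pcR !mA [mul w (mul y x)]mC.
- by apply: pairing_ext => w; rewrite !pcR [mul w (mul y x)]mC.
Qed.

Lemma nij_rep (N S : g -> g) : linear S -> admissible mul N S ->
  nijenhuis_rep mul N (coadjL mul) (coadjR mul) (dualmap S).
Proof.
move=> lS [adm1 adm2].
have pS := fun xi w => pD S xi w lS.
split; first exact: coadj_rep.
split; first exact: dual_lin.
split.
- move=> x v; apply: pairing_ext => w.
  rewrite !(pairingDl, pairingBl, pS, pcL).
  have h1 := congr1 (pairing v) (adm1 x w).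
  have h2 := congr1 (pairing v) (adm2 w x).
  rewrite pairing0r !(pairingBr, pairingDr) in h1 h2.
  apply/eqP; rewrite -subr_eq0; apply/eqP.
  rewrite -(subrr 0) -{1}h2 -h1; ring.
- move=> x v; apply: pairing_ext => w.
  rewrite !(pairingDl, pairingBl, pS, pcR).
  have h2 := congr1 (pairing v) (adm2 w x).
  rewrite pairing0r !(pairingBr, pairingDr) in h2.
  apply/eqP; rewrite -subr_eq0; apply/eqP.
  rewrite -h2; ring.
Qed.

End Rep.

Theorem corollary2p38 (K : fieldType) (n : nat)
  (mul : 'rV[K]_n -> 'rV[K]_n -> 'rV[K]_n)
  (mul_linl : forall y, linear (fun x => mul x y))
  (mul_linr : forall x, linear (mul x))
  (Hperm : perm_algebra mul)
  (N : {linear 'rV[K]_n -> 'rV[K]_n})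
  (HN : nijenhuis mul N)
  (r : 'M[K]_n) (Hsym : r^T = r)
  (S : {linear 'rV[K]_n -> 'rV[K]_n}) :
  (S_adm_PYBE mul N S r <->
     weak_O_operator mul N (coadjL mul) (coadjR mul) (dualmap S) (rsharp r)) /\
  (admissible mul N S ->
     (S_adm_PYBE mul N S r <->
        O_operator mul N (coadjL mul) (coadjR mul) (dualmap S) (rsharp r))).
Proof.
have W1 := weak1_iff K n mul mul_linl mul_linr r Hsym.
have W2 := weak2_iff K n r N S (linearPZ N) (linearPZ S).
have P1 : S_adm_PYBE mul N S r <->
     weak_O_operator mul N (coadjL mul) (coadjR mul) (dualmap S) (rsharp r).
  rewrite /S_adm_PYBE /weak_O_operator; split.
  - by case=> h1 h2; split; [apply/W1 | apply/W2].
  - by case=> h1 h2; split; [apply/W1 | apply/W2].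
split=> //.
move=> Hadm; split.
- move=> H; split; last exact/P1.
  exact: (nij_rep mul mul_linl mul_linr Hperm N S (linearPZ S) Hadm).
- by case=> _ /P1.
Qed.
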